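(* Let $C:2^M\to\mathbb{R}_{\ge0}$ be a monotone normalized cost function and $P_C$ its potential function. If $C$ is XOS (in particular, if $C$ is submodular), then $P_C(\vec S)\ge C(\vec S)$ for every allocation $\vec S$. If $C$ is subadditive, then $P_C(\vec S)\ge \frac{C(\vec S)}{2}$ for every allocation $\vec S$.
   Context: Setting. $N=\{1,\dots,n\}$ is a set of players and $M_1,\dots,M_n$ are pairwise disjoint finite sets; $M=\bigcup_i M_i$. An allocation is a vector $\vec S=(S_1,\dots,S_n)$ with $S_i\subseteq M_i$; since the $M_i$ are disjoint, allocations are identified with subsets $\bigcup_i S_i$ of $M$, so a function on allocations is a set function on $2^M$. The potential function of a cost function $C$ is $P_C(\vec S)=\sum_{\emptyset\neq I\subseteq N}\frac{C(\bigcup_{i\in I}S_i)}{|I|\binom{n}{|I|}}$. A set function $f$ on $2^M$ is XOS if there are additive functions $a_1,\dots,a_t$ (i.e. $a_r(S)=\sum_{j\in S}a_r(\{j\})$) with $f(S)=\max_r a_r(S)$ for all $S$; subadditive if $f(S)+f(T)\ge f(S\cup T)$ for all $S,T$. *)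

(* Defs.v *)
From HB Require Import structures.
From mathcomp Require Import all_boot all_order all_algebra.
Set Implicit Arguments. Unset Strict Implicit. Unset Printing Implicit Defensive.
Import Order.TTheory GRing.Theory Num.Theory.
Local Open Scope ring_scope.

(* The ground set M is a finType; [owner : M -> 'I_n]
   assigns each item to its player, so M_i = [set j | owner j == i] are
   pairwise disjoint and cover M.  An allocation (S_1,...,S_n) with
   S_i \subseteq M_i is identified with the set S = \bigcup_i S_i. *)

Definition part (M : finType) (n : nat) (owner : M -> 'I_n)
  (S : {set M}) (i : 'I_n) : {set M} := S :&: [set j | owner j == i].

Definition potential (R : realFieldType) (M : finType) (n : nat)
  (owner : M -> 'I_n) (C : {set M} -> R) (S : {set M}) : R :=
  \sum_(I : {set 'I_n} | I != set0)
     C (\bigcup_(i in I) part owner S i) / (#|I| * 'C(n, #|I|))%:R.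

Definition monotone (R : realFieldType) (M : finType) (C : {set M} -> R) :=
  forall A B : {set M}, A \subset B -> C A <= C B.

Definition normalized (R : realFieldType) (M : finType) (C : {set M} -> R) :=
  C set0 = 0.

Definition nonneg (R : realFieldType) (M : finType) (C : {set M} -> R) :=
  forall A : {set M}, 0 <= C A.

(* XOS: f = max of finitely many (t >= 1) additive functions a_1..a_t,
   a_r(S) = sum_{j in S} a_r({j}). The max is unfolded. *)
Definition XOS (R : realFieldType) (M : finType) (C : {set M} -> R) :=
  exists (t : nat) (a : 'I_t.+1 -> M -> R),
    forall A : {set M},
      (forall r, \sum_(j in A) a r j <= C A) /\
      (exists r, \sum_(j in A) a r j = C A).

Definition subadditive (R : realFieldType) (M : finType) (C : {set M} -> R) :=
  forall A B : {set M}, C (A :|: B) <= C A + C B.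

(* Main.v *)
Require Import Defs.
From HB Require Import structures.
From mathcomp Require Import all_boot all_order all_algebra.
Import Order.TTheory GRing.Theory Num.Theory.
Local Open Scope ring_scope.

Lemma sum_by_card (R : realFieldType) (T : finType) (P : pred {set T}) (f : nat -> R) :
  \sum_(I : {set T} | P I) f #|I| =
  \sum_(k < #|T|.+1) #|[set I | P I & #|I| == k]|%:R * f k.
Proof.
transitivity (\sum_(I | P I) \sum_(k < #|T|.+1) (if (k == #|I| :> nat) then f k else 0)).
  apply: eq_bigr => I _; rewrite -big_mkcond big_ord1_eq ltnS max_card //.
rewrite exchange_big; apply: eq_bigr => k _.
rewrite -big_mkcondr /= mulr_natl -sumr_const; apply: eq_big => // I.
by rewrite inE eq_sym.
Qed.

Lemma bigcup_part (M : finType) (n : nat) (owner : M -> 'I_n) (S : {set M}) (I : {set 'I_n}) :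
  \bigcup_(i in I) part owner S i = [set j in S | owner j \in I].
Proof.
apply/setP => j; rewrite !inE; apply/bigcupP/andP.
  by case=> i iI; rewrite /part !inE => /andP[-> /eqP ->].
by case=> jS oI; exists (owner j) => //; rewrite /part !inE jS eqxx.
Qed.

Lemma pot_eq (R : realFieldType) (M : finType) (n : nat) (owner : M -> 'I_n)
  (C : {set M} -> R) (S : {set M}) :
  potential owner C S = \sum_(I : {set 'I_n})
     C [set j in S | owner j \in I] * ((#|I| * 'C(n, #|I|))%:R)^-1.
Proof.
rewrite /potential big_mkcond; apply: eq_bigr => I _; rewrite bigcup_part.
by case: eqP => [->|_] //; rewrite cards0 ?mul0r ?mul0n invr0 mulr0.
Qed.

Lemma count_with (n : nat) (i : 'I_n) (k : nat) :
  (#|[set I : {set 'I_n} | (i \in I) & #|I| == k]| + 'C(n.-1, k) = 'C(n, k))%N.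
Proof.
have := cardsID [set I : {set 'I_n} | i \in I] [set A : {set 'I_n} | #|A| == k].
rewrite card_draws card_ord => <-; congr (_ + _)%N.
  by apply: eq_card => I; rewrite !inE andbC.
have -> : n.-1 = #|[set~ i]| by rewrite cardsC1 card_ord.
rewrite -cards_draws; apply: eq_card => I.
by rewrite !inE subsetC sub1set inE andbC.
Qed.

Lemma weight_sum (R : realFieldType) (n : nat) (i : 'I_n) :
  \sum_(I : {set 'I_n} | i \in I) ((#|I| * 'C(n, #|I|))%:R)^-1 = 1 :> R.
Proof.
rewrite (@sum_by_card R _ (fun I => i \in I) (fun k => ((k * 'C(n,k))%:R)^-1 : R)).
case: n i => [|n] i; first by case: i.
rewrite card_ord big_ord_recl /= ?mul0r ?mul0n invr0 mulr0 add0r.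
transitivity (\sum_(k < n.+1) ((n.+1)%:R)^-1 : R); last first.
  by rewrite sumr_const card_ord -[LHS]mulr_natr mulVf // pnatr_eq0.


apply: eq_bigr => k _.
have hc : #|[set I : {set 'I_n.+1} | (i \in I) & #|I| == (bump 0 k)]| = 'C(n, k).
  apply/eqP; rewrite -(eqn_add2r 'C(n, k.+1)) count_with /= addnC -binS //.
rewrite /bump /= add1n in hc *.
rewrite hc -mul_bin_diag /= natrM invfM mulrC -mulrA mulVf ?mulr1 //.
by rewrite pnatr_eq0 -lt0n bin_gt0 -ltnS.
Qed.

Theorem proposition3p3 (R : realFieldType) (M : finType) (n : nat)
  (owner : M -> 'I_n) (C : {set M} -> R) :
  nonneg C -> monotone C -> normalized C ->
  (XOS C -> forall S : {set M}, C S <= potential owner C S) /\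
  (subadditive C -> forall S : {set M}, C S / 2 <= potential owner C S).
Proof.
move=> Cge0 Cmono C0; rewrite /normalized in C0.
have wge0 : forall m : nat, 0 <= ((m%:R)^-1 : R) by move=> m; rewrite invr_ge0 ler0n.
split.
  move=> [t [a Ha]] S; have [r Hr] := (Ha S).2; rewrite pot_eq -Hr.
  apply: (@le_trans _ _ (\sum_(I : {set 'I_n})
      (\sum_(j in [set j in S | owner j \in I]) a r j) *
       ((#|I| * 'C(n, #|I|))%:R)^-1)); last first.
    by apply: ler_sum => I _; apply: ler_wpM2r; [apply: wge0 | apply: (Ha _).1].
  rewrite le_eqVlt; apply/orP; left; apply/eqP.
  transitivity (\sum_(I : {set 'I_n}) \sum_(j : M)
     (if j \in [set j0 in S | owner j0 \in I] then a r j else 0) *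
       ((#|I| * 'C(n, #|I|))%:R)^-1); last first.
    apply: eq_bigr => I _; rewrite mulr_suml [RHS]big_mkcond /=.
    by apply: eq_bigr => j _; case: ifP => _; rewrite ?mul0r.
  rewrite exchange_big big_mkcond /=; apply: eq_bigr => j _.
  case: (boolP (j \in S)) => jS.
    have E : a r j = \sum_(I : {set 'I_n} | owner j \in I)
        a r j * ((#|I| * 'C(n, #|I|))%:R)^-1.
      by rewrite -mulr_sumr weight_sum mulr1.
    rewrite [LHS]E big_mkcond /=; apply: eq_bigr => I _; rewrite inE jS /=.
    by case: (owner j \in I); rewrite ?mul0r.
  by rewrite big1 // => I _; rewrite inE (negbTE jS) mul0r.
move=> Csub S.
have Pge0 : forall S, 0 <= potential owner C S.
  by move=> S'; apply: sumr_ge0 => I _; apply: mulr_ge0; [apply: Cge0 | apply: wge0].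
case: (posnP n) => [n0|npos].
  have -> : S = set0.
    apply/setP => j; case: (owner j) => k hk; move: hk; rewrite n0; by case: k.
  by rewrite C0 mul0r.
set T := fun I : {set 'I_n} => [set j in S | owner j \in I].
set u := fun I : {set 'I_n} => ((n * 'C(n, #|I|))%:R)^-1 : R.
have step1 : \sum_(I : {set 'I_n}) C (T I) * u I <= potential owner C S.
  rewrite pot_eq /T; apply: ler_sum => I _.
  case: (eqVneq I set0) => [->|In0].
    have -> : [set j in S | owner j \in set0] = set0.
      by apply/setP => j; rewrite !inE andbF.
    by rewrite C0 !mul0r.
  apply: ler_wpM2l; first exact: Cge0.
  have kn : (#|I| <= n)%N by have := max_card I; rewrite card_ord.
  have Cpos : (0 < 'C(n, #|I|))%N by rewrite bin_gt0.
  rewrite /u lef_pV2 ?posrE ?ltr0n ?muln_gt0 ?Cpos ?npos ?card_gt0 ?In0 //.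
  by rewrite ler_nat leq_mul2r kn orbT.
rewrite ler_pdivrMr ?ltr0n //.
apply: le_trans (ler_wpM2r _ step1); last by [].
have cardC : forall I : {set 'I_n}, #|~: I| = (n - #|I|)%N.
  move=> I; have h := cardsC I; rewrite card_ord in h.
  have le : (#|I| <= n)%N by rewrite -[X in (_ <= X)%N]h leq_addr.
  by apply/eqP; rewrite -(eqn_add2l #|I|) h subnKC.
have uC : forall I, u (~: I) = u I.
  move=> I; rewrite /u cardC bin_sub //; have := max_card I; by rewrite card_ord.
have e2 : (\sum_(I : {set 'I_n}) C (T I) * u I) * 2 =
          \sum_(I : {set 'I_n}) (C (T I) + C (T (~: I))) * u I.
  rewrite mulr_natr mulr2n {2}(reindex_inj (@setC_inj _)) /= -big_split /=.
  by apply: eq_bigr => I _; rewrite uC mulrDl.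
rewrite e2.
apply: (@le_trans _ _ (\sum_(I : {set 'I_n}) C S * u I)); last first.
  apply: ler_sum => I _; apply: ler_wpM2r; first by apply: wge0.
  have <- : T I :|: T (~: I) = S.
    apply/setP => j; rewrite !inE; by case: (j \in S); case: (owner j \in I).
  exact: Csub.
rewrite -mulr_sumr; apply: ler_peMr; first exact: Cge0.
rewrite (@sum_by_card R _ predT (fun k => ((n * 'C(n,k))%:R)^-1 : R)) card_ord.
have -> : \sum_(k < n.+1) #|[set I : {set 'I_n} | predT I & #|I| == k]|%:R *
      ((n * 'C(n, k))%:R)^-1 = \sum_(k < n.+1) ((n%:R)^-1 : R).
  apply: eq_bigr => k _.
  have -> : #|[set I : {set 'I_n} | predT I & #|I| == k]| = 'C(n, k).
    have := card_draws ('I_n) k; rewrite card_ord => <-.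
    by apply: eq_card => I; rewrite !inE.
  rewrite natrM invfM mulrC -mulrA mulVf ?mulr1 // pnatr_eq0 -lt0n bin_gt0.
  by rewrite -ltnS.
rewrite big_ord_recr /= sumr_const card_ord -[_ *+ n]mulr_natr mulVf.
  by rewrite lerDl wge0.
by rewrite pnatr_eq0 -lt0n.
Qed.
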